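(* Let $m\equiv 2\pmod 4$ and $L=L'$. For $a\in\mathcal{R}$ the Lee weight of $ev(a)=(Tr(ax))_{x\in L'}$ is: (a) $0$ if $a=0$; (b) if $a=(u-1)^2a_3$ with $a_3\in\mathbb{F}_{3^m}$: $w_L(ev(a))=3^{3m}-3^{5m/2}$ when $a_3\in\mathcal{Q}$, and $w_L(ev(a))=3^{3m}+3^{5m/2}$ when $a_3\in\mathcal{N}$; (c) $w_L(ev(a))=3^{3m}-3^{2m}$ if $a\in\mathcal{R}\setminus\langle (u-1)^2\rangle$.
   Context: Let $R=\mathbb{F}_3[u]/(u^3-1)$ and $\mathcal{R}=\mathbb{F}_{3^m}[u]/(u^3-1)=\mathbb{F}_{3^m}+u\mathbb{F}_{3^m}+u^2\mathbb{F}_{3^m}$. Every element of $\mathcal{R}$ is uniquely $x_1+x_2(u-1)+x_3(u-1)^2$ with $x_i\in\mathbb{F}_{3^m}$; units are those with $x_1\neq0$. $\langle (u-1)^2\rangle=\{(u-1)^2a_3:a_3\in\mathbb{F}_{3^m}\}$. $Tr:\mathcal{R}\to R$ is $Tr(a+ub+u^2c)=tr(a)+u\,tr(b)+u^2tr(c)$, with $tr$ the absolute trace $\mathbb{F}_{3^m}\to\mathbb{F}_3$. $\mathcal{Q}$ and $\mathcal{N}$ denote the nonzero squares and the nonsquares of $\mathbb{F}_{3^m}$; $L'=\{x_1+x_2(u-1)+x_3(u-1)^2:x_1\in\mathcal{Q},x_2,x_3\in\mathbb{F}_{3^m}\}$. The Gray map $\phi:R\to\mathbb{F}_3^3$ is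 $\phi(a'+ub'+u^2c')=(a',b',c')$ ($a',b',c'\in\mathbb{F}_3$), extended coordinatewise to $R^n\to\mathbb{F}_3^{3n}$; the Lee weight $w_L(v)$ of $v\in R^n$ is the Hamming weight of $\phi(v)$. *)

(* Defs.v *)
From mathcomp Require Import all_boot all_order all_algebra.
Set Implicit Arguments. Unset Strict Implicit. Unset Printing Implicit Defensive.
Import GRing.Theory.
Local Open Scope ring_scope.

(* F plays the role of F_{3^m} (a finite field with #|F| = 3^m).
   Elements of  calR = F[u]/(u^3-1)  are triples ((a,b),c) meaning a + u b + u^2 c. *)
Definition calR (F : finFieldType) := (F * F * F)%type.

Section Defs.
Variable F : finFieldType.

(* multiplication in F[u]/(u^3 - 1) *)
Definition mulR (x y : calR F) : calR F :=
  let: (a, b, c) := x in let: (a', b', c') := y in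
  (a * a' + b * c' + c * b', a * b' + b * a' + c * c', a * c' + b * b' + c * a').

(* the element x1 + x2 (u-1) + x3 (u-1)^2 written in the basis 1, u, u^2 *)
Definition uB (x1 x2 x3 : F) : calR F := (x1 - x2 + x3, x2 - x3 *+ 2, x3).

(* absolute trace F_{3^m} -> F_3 ; its values lie in the prime subfield F_3 of F *)
Definition tr (m : nat) (x : F) : F := \sum_(i < m) x ^+ (3 ^ i).

Definition isQ (x : F) : bool := (x != 0) && [exists y : F, y ^+ 2 == x].
Definition isN (x : F) : bool := ~~ [exists y : F, y ^+ 2 == x].

Definition in_ideal_u1sq (a : calR F) : Prop := exists a3 : F, a = uB 0 0 a3.

(* Lee weight of an element of R = F_3[u]/(u^3-1), given by its coefficient
   triple (a',b',c') (with a',b',c' in the prime field F_3 of F):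
   Hamming weight of its Gray image (a',b',c'). *)
Definition leeR (r : calR F) : nat :=
  let: (a, b, c) := r in (((a != 0%R) : nat) + ((b != 0%R) : nat) + ((c != 0%R) : nat))%N.

Definition TrR (m : nat) (r : calR F) : calR F :=
  let: (a, b, c) := r in (tr m a, tr m b, tr m c).

(* Lee weight of ev(a) = (Tr(a x))_{x in L'}, where
   L' = { x1 + x2(u-1) + x3(u-1)^2 : x1 in Q, x2, x3 in F } (indexed bijectively
   by the triples (x1,x2,x3) with x1 in Q). *)
Definition wL_ev (m : nat) (a : calR F) : nat :=
  (\sum_(t : F * F * F | isQ t.1.1) leeR (TrR m (mulR a (uB t.1.1 t.1.2 t.2))))%N.

End Defs.

(* Main.v *)
Require Import Defs.
From mathcomp Require Import all_boot all_order all_algebra ring.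
From mathcomp Require Import zify finfield cyclic.
Set Implicit Arguments. Unset Strict Implicit. Unset Printing Implicit Defensive.
Import GRing.Theory.
Local Open Scope ring_scope.

Section Main.
Variable F : finFieldType.
Hypothesis h3 : (3%:R : F) = 0.

Lemma two_neq0 : (2%:R : F) != 0.
Proof.
apply/eqP => h2. have : (1 : F) = 0.
  have -> : (1 : F) = 3%:R - 2%:R by rewrite -natrB.
  by rewrite h3 h2 subr0.
by move/eqP; rewrite oner_eq0.
Qed.

Lemma frob3 (x y : F) : (x + y) ^+ 3 = x ^+ 3 + y ^+ 3.
Proof. ring: h3. Qed.

Lemma frobD n (x y : F) : (x + y) ^+ (3 ^ n) = x ^+ (3 ^ n) + y ^+ (3 ^ n).
Proof.
elim: n => [|n IH]; first by rewrite !expr1.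
by rewrite expnSr !exprM IH frob3.
Qed.

Lemma frobN n (x : F) : (- x) ^+ (3 ^ n) = - x ^+ (3 ^ n).
Proof.
apply/eqP; rewrite -subr_eq0 opprK addrC -frobD subrr expr0n.
by rewrite expn_eq0.
Qed.

Lemma frob0 n : (0 : F) ^+ (3 ^ n) = 0.
Proof. by rewrite expr0n expn_eq0. Qed.

Lemma trD n (x y : F) : tr n (x + y) = tr n x + tr n y.
Proof. by rewrite /tr -big_split /=; apply: eq_bigr => i _; rewrite frobD. Qed.

Lemma trN n (x : F) : tr n (- x) = - tr n x.
Proof. by rewrite /tr -sumrN; apply: eq_bigr => i _; rewrite frobN. Qed.

Lemma tr0 n : tr n (0 : F) = 0.
Proof. by rewrite /tr big1 // => i _; rewrite frob0. Qed.

Lemma trB n (x y : F) : tr n (x - y) = tr n x - tr n y.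
Proof. by rewrite trD trN. Qed.

Lemma trMn n (x : F) k : tr n (x *+ k) = tr n x *+ k.
Proof. by elim: k => [|k IH]; rewrite ?tr0 // !mulrS trD IH. Qed.


Lemma card_roots_le (p : {poly F}) (A : {set F}) :
  p != 0 -> {in A, forall x, root p x} -> (#|A| < size p)%N.
Proof.
move=> p0 H; rewrite cardE; apply: max_poly_roots => //; last exact: enum_uniq.
by apply/allP => x; rewrite mem_enum; exact: H.
Qed.

Lemma frob_sum n (f : 'I_n -> F) : (\sum_(i < n) f i) ^+ 3 = \sum_(i < n) f i ^+ 3.
Proof.
elim: n f => [|n IH] f; first by rewrite !big_ord0 expr0n.
by rewrite !big_ord_recr /= frob3 IH.
Qed.

Lemma tr_cube n (x : F) : x ^+ (3 ^ n) = x -> (tr n x) ^+ 3 = tr n x.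
Proof.
move=> hx; rewrite /tr frob_sum.
have E : \sum_(i < n) (x ^+ (3 ^ i)) ^+ 3 = \sum_(i < n) x ^+ (3 ^ i.+1).
  by apply: eq_bigr => i _; rewrite -exprM expnSr.
rewrite E.
have E1 : \sum_(i < n.+1) x ^+ (3 ^ i) = x ^+ (3 ^ 0) + \sum_(i < n) x ^+ (3 ^ i.+1).
  by rewrite big_ord_recl.
have E2 : \sum_(i < n.+1) x ^+ (3 ^ i) = \sum_(i < n) x ^+ (3 ^ i) + x ^+ (3 ^ n).
  by rewrite big_ord_recr.
have := etrans (esym E1) E2; rewrite expn0 expr1 hx addrC => /addIr.
by move=> ->.
Qed.

Lemma cube_vals (t : F) : t ^+ 3 = t -> [|| t == 0, t == 1 | t == 2%:R].
Proof.
move=> ht.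
have : t * (t - 1) * (t - 2%:R) = 0.
  have -> : t * (t - 1) * (t - 2%:R) = t ^+ 3 - t + 3%:R * (t - t ^+ 2) by ring.
  rewrite h3 mul0r addr0.
  by rewrite ht subrr.
move/eqP; rewrite !mulf_eq0 !subr_eq0 => /orP [/orP [] | ] /eqP ->; by rewrite ?eqxx ?orbT.
Qed.

Definition trpoly n (c : F) : {poly F} := \sum_(i < n) 'X^(3 ^ i) - c%:P.

Lemma size_trpoly n c : (0 < n)%N -> size (trpoly n c) = (3 ^ (n - 1)).+1.
Proof.
case: n => // n _; rewrite /trpoly big_ord_recr /= subn1 /= addrAC addrC.
rewrite size_addl ?size_polyXn //.
apply: (leq_ltn_trans (size_add _ _)); rewrite gtn_max; apply/andP; split.
  apply: (leq_ltn_trans (size_sum _ _ _)).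
  rewrite ltnS; apply/bigmax_leqP => i _; rewrite size_polyXn.
  by rewrite ltn_exp2l.
by rewrite size_opp (leq_ltn_trans (size_polyC_leq1 _)) // ltnS expn_gt0.
Qed.

Lemma root_trpoly n c x : root (trpoly n c) x = (tr n x == c).
Proof.
rewrite /root /trpoly hornerD hornerN hornerC horner_sum subr_eq0.
by rewrite /tr; under eq_bigr => i _ do rewrite hornerXn.
Qed.

Lemma fiber_le n (S : {set F}) c : (0 < n)%N ->
  (#|[set x in S | tr n x == c]| <= 3 ^ (n - 1))%N.
Proof.
move=> n0; rewrite -ltnS -(size_trpoly c n0); apply: card_roots_le.
  by rewrite -size_poly_eq0 size_trpoly.
by move=> x; rewrite inE root_trpoly => /andP[].
Qed.

Lemma card_sep (S : {set F}) (P : pred F) :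
  #|[set x in S | P x]| = (\sum_(x in S) (P x : nat))%N.
Proof.
rewrite -sum1_card big_mkcond [RHS]big_mkcond /=; apply: eq_bigr => x _.
by rewrite inE; case: (x \in S); case: (P x).
Qed.


Lemma card_sepT (T : finType) (S : {set T}) (P : pred T) :
  #|[set x in S | P x]| = (\sum_(x in S) (P x : nat))%N.
Proof.
rewrite -sum1_card big_mkcond [RHS]big_mkcond /=; apply: eq_bigr => x _.
by rewrite inE; case: (x \in S); case: (P x).
Qed.

Lemma one_neq0 : (1 : F) != 0. Proof. exact: oner_neq0. Qed.
Lemma two_neq1 : (2%:R : F) != 1.
Proof.
apply/eqP => h; have : (1 : F) = 0.
  have -> : (1 : F) = 2%:R - 1 by ring.
  by rewrite h subrr.
by move/eqP; rewrite oner_eq0.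
Qed.

Lemma F3_cases (t : F) : [|| t == 0, t == 1 | t == 2%:R] ->
  ((t == 0) : nat) + ((t == 1) : nat) + ((t == 2%:R) : nat) = 1%N.
Proof.
have h1 := one_neq0; have h2 := two_neq0; have h21 := two_neq1.
have h1' : (0 : F) != 1 by rewrite eq_sym.
have h2' : (0 : F) != 2%:R by rewrite eq_sym.
have h21' : (1 : F) != 2%:R by rewrite eq_sym.
case/or3P => /eqP ->; rewrite ?eqxx ?(negbTE h1) ?(negbTE h2) ?(negbTE h21).
all: by rewrite ?(negbTE h1') ?(negbTE h2') ?(negbTE h21').
Qed.

Lemma fiber_card n (S : {set F}) : (0 < n)%N -> {in S, forall x, x ^+ (3 ^ n) = x} ->
  #|S| = (3 ^ n)%N -> forall c, [|| c == 0, c == 1 | c == 2%:R] ->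
  #|[set x in S | tr n x == c]| = (3 ^ (n - 1))%N.
Proof.
move=> n0 hS cS.
have H : #|S| = (#|[set x in S | tr n x == 0%R]| + #|[set x in S | tr n x == 1%R]|
     + #|[set x in S | tr n x == 2%:R%R]|)%N.
  rewrite !card_sep -!big_split /= -sum1_card; apply: eq_bigr => x xS.
  by symmetry; apply: F3_cases; apply: cube_vals; apply: tr_cube; apply: hS.
have b0 := fiber_le S 0 n0; have b1 := fiber_le S 1 n0; have b2 := fiber_le S 2%:R n0.
have e : (3 ^ n = 3 * 3 ^ (n - 1))%N by case: n n0 {hS cS H b0 b1 b2} => // n _; rewrite expnS subn1.
rewrite cS e in H.
have [X0 [X1 X2]] : [/\ #|[set x in S | tr n x == 0%R]| = 3 ^ (n - 1),
   #|[set x in S | tr n x == 1%R]| = 3 ^ (n - 1) &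
   #|[set x in S | tr n x == 2%:R%R]| = 3 ^ (n - 1)]%N.
  move: H b0 b1 b2; set N := (3 ^ (n - 1))%N.
  set f0 := #|_|; set f1 := #|_|; set f2 := #|_|. move=> *; split; lia.
by move=> c /or3P [] /eqP ->.
Qed.


Lemma card_bij (T1 T2 : finType) (f : T1 -> T2) (A : {set T1}) (B : {set T2}) :
  {in A &, injective f} -> (forall x, x \in A -> f x \in B) ->
  (forall y, y \in B -> exists2 x, x \in A & y = f x) -> #|B| = #|A|.
Proof.
move=> inj fAB fBA; suff -> : B = f @: A by rewrite card_in_imset.
apply/setP => y; apply/idP/imsetP; first exact: fBA.
by case=> x xA ->; exact: fAB.
Qed.

Lemma card_frob_le k (c : F) : (0 < k)%N ->
  (#|[set x : F | x ^+ (3 ^ k) == (c * x)%R]| <= 3 ^ k)%N.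
Proof.
move=> k0; pose p : {poly F} := 'X^(3 ^ k) - c *: 'X.
have sp : size p = (3 ^ k).+1.
  rewrite /p size_addl ?size_polyXn // size_opp.
  apply: (leq_ltn_trans (size_scale_leq _ _)); rewrite size_polyX ltnS.
  have : (3 <= 3 ^ k)%N by rewrite -{1}(expn1 3) leq_exp2l.
  lia.
rewrite -ltnS -sp; apply: card_roots_le; first by rewrite -size_poly_eq0 sp.
move=> x; rewrite inE /root /p hornerD hornerN hornerZ hornerX hornerXn subr_eq0.
by [].
Qed.


Section Sigma.
Variables (k : nat) (i : F).
Hypotheses (hk : (0 < k)%N) (hi2 : i ^+ 2 = -1) (hsi : i ^+ (3 ^ k) = - i)
  (hcard : #|F| = (3 ^ k * 3 ^ k)%N).

Local Notation sig x := (x ^+ (3 ^ k)).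

Lemma sig_inv (x : F) : sig (sig x) = x.
Proof. by rewrite -exprM -hcard expf_card. Qed.

Definition Wset := [set a : F | a ^+ (3 ^ k) == (i * a)%R].
Definition W'set := [set b : F | b ^+ (3 ^ k) == (- i * b)%R].
Definition Kset := [set y : F | y ^+ (3 ^ k) == (1 * y)%R].

Lemma decomp (x : F) : exists2 p, p \in setX Wset W'set & x = p.1 + p.2.
Proof.
exists (i * sig x - x, - (x + i * sig x)); last first.
  rewrite /=; have -> : i * sig x - x + - (x + i * sig x) = x - 3%:R * x by ring.
  by rewrite h3 mul0r subr0.
rewrite !inE /=; apply/andP; split; apply/eqP.
  rewrite frobD frobN exprMn hsi sig_inv.
  have -> : i * (i * sig x - x) = i ^+ 2 * sig x - i * x by ring.
  rewrite hi2; ring.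
rewrite frobN frobD exprMn hsi sig_inv.
have -> : - i * - (x + i * sig x) = i * x + i ^+ 2 * sig x by ring.
rewrite hi2; ring.
Qed.

Lemma add_inj : {in setX Wset W'set &, injective (fun p : F * F => p.1 + p.2)}.
Proof.
move=> [a b] [a' b']; rewrite !inE /= => /andP [/eqP ha /eqP hb] /andP [/eqP ha' /eqP hb'] e.
have hd1 : sig (a - a') = i * (a - a') by rewrite frobD frobN ha ha'; ring.
have hd2 : sig (a - a') = - i * (a - a').
  have -> : a - a' = b' - b by rewrite -(addrK b a) e; ring.
  by rewrite frobD frobN hb hb'; ring.
have : (2%:R * i) * (a - a') = 0.
  have -> : (2%:R * i) * (a - a') = i * (a - a') - (- i * (a - a')) by ring.
  by rewrite -hd1 -hd2 subrr.
have i0 : i != 0 by apply/eqP => i0; move: hi2; rewrite i0 expr0n /= => /eqP; rewrite eq_sym oppr_eq0 oner_eq0.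
move/eqP; rewrite !mulf_eq0 (negbTE two_neq0) (negbTE i0) /= subr_eq0 => /eqP ea.
by rewrite ea in e *; rewrite (addrI _ e).
Qed.

Lemma card_WW' : #|F| = (#|Wset| * #|W'set|)%N.
Proof.
rewrite -cardsX -cardsT; apply: (card_bij add_inj) => //.
by move=> y _; exact: decomp.
Qed.

Lemma card_W : #|Wset| = (3 ^ k)%N.
Proof.
have h1 := card_frob_le i hk; have h2 := card_frob_le (- i) hk.
have := card_WW'; rewrite hcard /Wset /W'set.
move: h1 h2; set a := #|_|; set b := #|_|; set N := (3 ^ k)%N; move=> *; nia.
Qed.

Lemma card_W' : #|W'set| = (3 ^ k)%N.
Proof.
have h1 := card_frob_le i hk; have h2 := card_frob_le (- i) hk.
have := card_WW'; rewrite hcard /Wset /W'set.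
move: h1 h2; set a := #|_|; set b := #|_|; set N := (3 ^ k)%N; move=> *; nia.
Qed.


Lemma tr_split (z : F) : tr (k + k) z = tr k z + tr k (sig z).
Proof.
rewrite /tr big_split_ord /=; congr (_ + _); apply: eq_bigr => j _ /=.
by rewrite expnD exprM.
Qed.

Lemma i_neq0 : i != 0.
Proof.
apply/eqP => i0; move: hi2; rewrite i0 expr0n /= => /eqP.
by rewrite eq_sym oppr_eq0 oner_eq0.
Qed.

Lemma exists_W0 : exists a0, (a0 != 0) && (a0 \in Wset).
Proof.
apply/existsP; apply: contraT => /existsPn H.
have : Wset \subset [set 0].
  apply/subsetP => x xW; rewrite inE; have := H x; rewrite xW andbT.
  by rewrite negbK.
move/subset_leq_card; rewrite cards1 card_W.
have : (3 <= 3 ^ k)%N by rewrite -{1}(expn1 3) leq_exp2l.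
by case: (3 ^ k)%N => // [] [] // [].
Qed.

Lemma mulWW'K a b : a \in Wset -> b \in W'set -> a * b \in Kset.
Proof.
rewrite !inE => /eqP ha /eqP hb; apply/eqP; rewrite exprMn ha hb.
have -> : i * a * (- i * b) = - (i ^+ 2) * (a * b) by ring.
by rewrite hi2 opprK !mul1r.
Qed.

Lemma imK a0 : a0 != 0 -> a0 \in Wset -> (fun b => a0 * b) @: W'set = Kset.
Proof.
move=> a00 a0W; apply/eqP; rewrite eqEcard; apply/andP; split.
  by apply/subsetP => y /imsetP [b bW' ->]; exact: mulWW'K.
rewrite card_imset; last exact: mulfI.
by rewrite card_W'; exact: (card_frob_le 1 hk).
Qed.

Lemma card_K : #|Kset| = (3 ^ k)%N.
Proof.
have [a0 /andP [a00 a0W]] := exists_W0.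
by rewrite -(imK a00 a0W) card_imset ?card_W' //; exact: mulfI.
Qed.

Lemma trK0 : #|[set y in Kset | tr (k + k) y == 0]| = (3 ^ (k - 1))%N.
Proof.
have hS : {in Kset, forall x, x ^+ (3 ^ k) = x}.
  by move=> y; rewrite inE mul1r => /eqP.
rewrite -(@fiber_card k Kset hk hS card_K 0) ?eqxx //.
apply: eq_card => y; rewrite !inE; case yK: (_ == _) => //=.
rewrite tr_split (eqP yK) mul1r -mulr2n -mulr_natr mulf_eq0.
by rewrite (negbTE two_neq0) orbF.
Qed.

Lemma fiberW a0 : a0 != 0 -> a0 \in Wset ->
  #|[set b in W'set | tr (k + k) (a0 * b) == 0]| = (3 ^ (k - 1))%N.
Proof.
move=> a00 a0W; rewrite -trK0; symmetry.
apply: (card_bij (f := fun b => a0 * b)).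
- by move=> x y _ _; exact: mulfI.
- move=> b; rewrite inE => /andP [bW tb].
  by rewrite [_ \in [set _ in _ | _]]inE tb andbT; apply: mulWW'K.
- move=> y; rewrite inE => /andP [yK ty].
  have : y \in (fun b => a0 * b) @: W'set by rewrite imK.
  by case/imsetP => b bW' ey; exists b => //; rewrite inE bW' -ey.
Qed.


Lemma tr_sq_W a : a \in Wset -> tr (k + k) (a ^+ 2) = 0.
Proof.
rewrite inE => /eqP ha; rewrite tr_split -exprM mulnC exprM ha exprMn hi2.
by rewrite mulN1r trN subrr.
Qed.

Lemma tr_sq_W' b : b \in W'set -> tr (k + k) (b ^+ 2) = 0.
Proof.
rewrite inE => /eqP hb; rewrite tr_split -exprM mulnC exprM hb exprMn sqrrN hi2.
by rewrite mulN1r trN subrr.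
Qed.

Lemma S0_count : #|[set x : F | tr (k + k) (x ^+ 2) == 0]| =
  (3 ^ k + (3 ^ k - 1) * 3 ^ (k - 1))%N.
Proof.
have step1 : #|[set x : F | tr (k + k) (x ^+ 2) == 0]| =
    #|[set p in setX Wset W'set | tr (k + k) (p.1 * p.2) == 0]|.
  apply: (card_bij (f := fun p : F * F => p.1 + p.2)).
  - by move=> p q /setIdP [pX _] /setIdP [qX _]; apply: add_inj.
  - move=> [a b] /setIdP [pX hp]; rewrite inE /=.
    move: pX; rewrite in_setX => /andP [aW bW'].
    rewrite sqrrD !trD tr_sq_W // tr_sq_W' // add0r addr0.
    by rewrite /= in hp; rewrite (eqP hp) addr0.
  - move=> x; rewrite inE => hx; have [[a b] pX ex] := decomp x.
    exists (a, b) => //; apply/setIdP; split => //=.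
    move: pX hx; rewrite in_setX ex /= => /andP [aW bW'].
    rewrite sqrrD !trD tr_sq_W // tr_sq_W' // add0r addr0.
    by rewrite -mulr2n -mulr_natr mulf_eq0 (negbTE two_neq0) orbF.
rewrite step1 card_sepT.
have -> : (\sum_(p in setX Wset W'set) (tr (k + k) (p.1 * p.2)%R == 0%R : nat) =
   \sum_(a in Wset) \sum_(b in W'set) (tr (k + k) (a * b)%R == 0%R : nat))%N.
  rewrite pair_big_dep /=; apply: eq_bigl => [[a b]]; by rewrite in_setX.
have W0 : (0 : F) \in Wset by rewrite inE expr0n expn_eq0 /= mulr0.
rewrite (bigD1 0) //=.
have -> : (\sum_(b in W'set) (tr (k + k) (0 * b)%R == 0%R : nat))%N = (3 ^ k)%N.
  rewrite -card_W' -sum1_card; apply: eq_bigr => b _; by rewrite mul0r tr0 eqxx.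
have -> : (\sum_(a | (a \in Wset) && (a != 0%R)) \sum_(b in W'set) (tr (k + k) (a * b)%R == 0%R : nat))%N
    = (\sum_(a | (a \in Wset) && (a != 0%R)) 3 ^ (k - 1))%N.
  apply: eq_bigr => a /andP [aW a0]; by rewrite -card_sepT fiberW.
rewrite sum_nat_const; congr (_ + _ * _)%N.
have e := cardD1 0 Wset; rewrite W0 card_W in e.
transitivity #|[predD1 Wset & 0]|; last by rewrite e add1n subn1.
apply: eq_card => a /=; rewrite [in RHS]inE andbC.
by rewrite unfold_in.
Qed.

End Sigma.




Lemma natF0 n : ((n%:R : F) == 0) = (3 %| n)%N.
Proof.
rewrite {1}(divn_eq n 3) natrD natrM h3 mulr0 add0r /dvdn.
have : (n %% 3 < 3)%N by rewrite ltn_mod.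
case: (n %% 3)%N => [|[|[|]]] // _.
- by apply/eqP.
- by rewrite /=; apply/negbTE; exact: one_neq0.
- by rewrite /=; apply/negbTE; exact: two_neq0.
Qed.

Definition w3 (t1 t2 t3 : F) : nat := leeR (uB t1 t2 t3).

Lemma w3_nat a b c : w3 a%:R b%:R c%:R =
  ((~~ (3 %| a + b + b + c)) + (~~ (3 %| b + c)) + (~~ (3 %| c)))%N.
Proof.
rewrite /w3 /uB /leeR.
have -> : (a%:R - b%:R + c%:R : F) = (a + b + b + c)%N%:R.
  apply/eqP; rewrite -subr_eq0.
  have -> : (a%:R - b%:R + c%:R : F) - (a + b + b + c)%N%:R = - (3%:R * b%:R).
    by rewrite !natrD; ring.
  by rewrite h3 mul0r oppr0.
have -> : (b%:R - c%:R *+ 2 : F) = (b + c)%N%:R.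
  apply/eqP; rewrite -subr_eq0.
  have -> : (b%:R - c%:R *+ 2 : F) - (b + c)%N%:R = - (3%:R * c%:R).
    by rewrite !natrD; ring.
  by rewrite h3 mul0r oppr0.
by rewrite !natF0.
Qed.

Lemma w3_sum2 (c : 'I_3) : (\sum_(s < 3) \sum_(t < 3) w3 c%:R s%:R t%:R = 18)%N.
Proof.
by case: c => [[|[|[|]]]] //= _; rewrite !big_ord_recr !big_ord0 /= !w3_nat.
Qed.

Lemma w3_sum1 (c : 'I_3) : (\sum_(t < 3) w3 0%:R c%:R t%:R = 6)%N.
Proof.
by case: c => [[|[|[|]]]] //= _; rewrite !big_ord_recr !big_ord0 /= !w3_nat.
Qed.

Lemma w3_00 (c : 'I_3) : w3 0%:R 0%:R c%:R = (3 * (c != 0 :> nat))%N.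
Proof.
by case: c => [[|[|[|]]]] //= _; rewrite !w3_nat.
Qed.


Lemma natF_inj (c d : nat) : (c < 3)%N -> (d < 3)%N -> ((c%:R : F) == d%:R) = (c == d).
Proof.
move=> hc hd; rewrite -subr_eq0; case: (leqP c d) => h.
  rewrite -opprB -natrB // oppr_eq0 natF0; apply/idP/eqP => H; [|rewrite H subnn //].
  move: H => /dvdnP [q hq]; lia.
rewrite -natrB ?(ltnW h) // natF0; apply/idP/eqP => H; [|lia].
move: H => /dvdnP [q hq]; lia.
Qed.

Lemma sum_setT (T : finType) (f : T -> nat) : (\sum_(y in [set: T]) f y = \sum_y f y)%N.
Proof. by apply: eq_bigl => y; rewrite inE. Qed.

Section Sums.
Variable m : nat.
Hypotheses (hm0 : (0 < m)%N) (hFm : #|F| = (3 ^ m)%N).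

Lemma tr_ord (y : F) : exists c : 'I_3, tr m y = c%:R.
Proof.
have : [|| tr m y == 0, tr m y == 1 | tr m y == 2%:R].
  by apply: cube_vals; apply: tr_cube; rewrite -hFm expf_card.
case/or3P => /eqP ->; [exists ord0 | exists (Ordinal (isT : (1 < 3)%N)) | exists (Ordinal (isT : (2 < 3)%N))] => //.
Qed.

Lemma fiberF (c : 'I_3) : (\sum_(y : F) (tr m y == c%:R : nat))%N = (3 ^ (m - 1))%N.
Proof.
rewrite -sum_setT -card_sepT; apply: fiber_card => //; first by move=> x _; rewrite -hFm expf_card.
  by rewrite cardsT.
case: c => [[|[|[|]]]] //= _; by rewrite ?eqxx ?orbT.
Qed.

Lemma sum_tr (g : F -> nat) :
  (\sum_(y : F) g (tr m y) = 3 ^ (m - 1) * \sum_(c < 3) g c%:R)%N.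
Proof.
have E : forall y, g (tr m y) = (\sum_(c < 3) (tr m y == c%:R) * g c%:R)%N.
  move=> y; have [c0 ->] := tr_ord y.
  rewrite (bigD1 c0) //= eqxx mul1n big1 ?addn0 // => c hc.
  have -> : ((c0%:R : F) == c%:R) = false.
    rewrite natF_inj //; apply/negbTE; rewrite eq_sym; exact: hc.
  by [].
rewrite (eq_bigr _ (fun y _ => E y)) exchange_big /= big_distrr /=.
apply: eq_bigr => c _; rewrite -big_distrl /= fiberF.
by [].
Qed.

End Sums.


Lemma mulR_uB (a1 a2 a3 x1 x2 x3 : F) :
  mulR (uB a1 a2 a3) (uB x1 x2 x3) =
  uB (a1 * x1) (a1 * x2 + a2 * x1) (a1 * x3 + a2 * x2 + a3 * x1).
Proof.
rewrite /mulR /uB; congr (_, _, _); apply/eqP; rewrite -subr_eq0; apply/eqP.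
- by transitivity (3%:R * (- (a3 * x3))); [ring | rewrite h3 mul0r].
- by transitivity (3%:R * (a2 * x3 + a3 * x2 - a3 * x3)); [ring | rewrite h3 mul0r].
- by transitivity (3%:R * (- (a2 * x3) + 2%:R * a3 * x3 - a3 * x2)); [ring | rewrite h3 mul0r].
Qed.

Lemma TrR_uB n (y1 y2 y3 : F) : TrR n (uB y1 y2 y3) = uB (tr n y1) (tr n y2) (tr n y3).
Proof. by rewrite /TrR /uB trD trB trB trMn. Qed.

Lemma uB_surj (a : calR F) : exists a1 a2 a3, a = uB a1 a2 a3.
Proof.
case: a => [[a b] c]; exists (a + (b + c *+ 2) - c), (b + c *+ 2), c.
by rewrite /uB; congr (_, _, _); ring.
Qed.

Lemma wL_split n (a : calR F) : wL_ev n a =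
  (\sum_(x1 | isQ x1) \sum_(x2 : F) \sum_(x3 : F) leeR (TrR n (mulR a (uB x1 x2 x3))))%N.
Proof.
rewrite /wL_ev; symmetry.
rewrite pair_big /= pair_big /=; apply: eq_bigl => [[[x1 x2] x3]] /=.
by rewrite !andbT.
Qed.


Lemma card_predE (T : finType) (C : pred T) : #|[set x | C x]| = (\sum_(x | C x) 1)%N.
Proof. by rewrite (eq_bigl (fun x => x \in [set x | C x])) ?sum1_card // => x; rewrite inE. Qed.

Lemma sq_count (P : pred F) :
  #|[set x : F | (x != 0) && P (x ^+ 2)]| = (2 * #|[set y : F | isQ y && P y]|)%N.
Proof.
rewrite !card_predE.
rewrite (partition_big (fun x : F => x ^+ 2) (fun y => isQ y && P y)); last first.
  move=> x /andP [x0 hP]; rewrite hP andbT /isQ expf_eq0 /= x0 /=.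
  by apply/existsP; exists x.
rewrite big_distrr /=; apply: eq_bigr => y /andP [/andP [y0 /existsP [x0 /eqP hx0]] hPy].
have nx0 : (x0 != - x0) = true.
  apply/negP => /eqP e; move: y0; rewrite -hx0 expf_eq0 /=.
  have : (2%:R * x0 = 0) by rewrite mulr_natl mulr2n {1}e addNr.
  move/eqP; rewrite mulf_eq0 (negbTE two_neq0) /= => /eqP ->.
  by rewrite eqxx.
rewrite muln1; transitivity #|[set x0; - x0]|; last by rewrite cards2 nx0.
rewrite -sum1_card; apply: eq_bigl => x; rewrite !inE /= -hx0 eqf_sqr.
apply/idP/idP.
  by move=> /andP [_ ->].
move=> h; rewrite h andbT.
have -> : x ^+ 2 = y by rewrite -hx0; case/orP: h => /eqP ->; rewrite ?sqrrN.
rewrite hPy andbT; apply/eqP => x00; move: y0; rewrite -hx0.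
move=> x0sq; have : x0 == 0.
  case/orP: h => /eqP; rewrite x00 => e; first by rewrite -e.
  by rewrite -oppr_eq0 -e.
by move/eqP => z; rewrite z expr0n eqxx in x0sq.
Qed.


Lemma sum_affine (g : F -> nat) (a b : F) : a != 0 ->
  (\sum_(x : F) g (a * x + b)%R = \sum_(x : F) g x)%N.
Proof.
move=> a0; symmetry; apply: (reindex_inj (h := fun x => a * x + b)).
by move=> x y /addIr /(mulfI a0).
Qed.


Lemma cnt_card (C : pred F) : #|[set x | C x]| = (\sum_(x : F) (C x : nat))%N.
Proof.
rewrite card_predE big_mkcond /=; apply: eq_bigr => x _.
by case: (C x).
Qed.

Lemma ex_sq0 : [exists z : F, z ^+ 2 == 0].
Proof. by apply/existsP; exists 0; rewrite expr0n. Qed.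

Lemma split_pointwise (P : pred F) y :
  (P y : nat) = ((P y && (y == 0%R)) + (P y && isQ y) + (P y && isN y))%N.
Proof.
rewrite /isQ /isN; case: (P y) => //=; case: eqP => [-> | y0] /=.
  by rewrite ex_sq0.
by case: [exists _, _].
Qed.

Lemma cnt_split (P : pred F) : P 0 ->
  (\sum_(y : F) (P y : nat) = 1 + \sum_(y : F) (P y && isQ y : nat)
     + \sum_(y : F) (P y && isN y : nat))%N.
Proof.
move=> hP0; rewrite (eq_bigr _ (fun y _ => split_pointwise P y)) !big_split /=.
congr (_ + _ + _)%N; rewrite (bigD1 0) //= eqxx hP0 big1 // => y /negbTE ->.
by rewrite andbF.
Qed.

Lemma isQ_mul (a x : F) : isQ a -> isQ x -> isQ (a * x).
Proof.
rewrite /isQ => /andP [a0 /existsP [s /eqP hs]] /andP [x0 /existsP [t /eqP ht]].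
rewrite mulf_neq0 //=; apply/existsP; exists (s * t).
by rewrite exprMn hs ht.
Qed.

Lemma isN_mul (a x : F) : isN a -> isQ x -> isN (a * x).
Proof.
rewrite /isQ /isN => hN /andP [x0 /existsP [t /eqP ht]].
apply: contra hN => /existsP [z /eqP hz]; apply/existsP; exists (z / t).
have t0 : t != 0 by apply: contra x0 => /eqP t0; rewrite -ht t0 expr0n.
by rewrite exprMn exprVn hz -ht mulfK // expf_neq0.
Qed.

Lemma isN_neq0 (a : F) : isN a -> a != 0.
Proof. by rewrite /isN; apply: contra => /eqP ->; rewrite ex_sq0. Qed.

Lemma mulQ (T : pred F) (a3 : F) : a3 != 0 -> (forall x, isQ x -> T (a3 * x)) ->
  (\sum_(y : F) (T y : nat) <= \sum_(y : F) (isQ y : nat))%N ->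
  forall P : pred F, #|[set x | isQ x && P (a3 * x)]| = #|[set y | T y && P y]|.
Proof.
move=> a30 hT hle P.
have im : (fun x => a3 * x) @: [set x | isQ x] = [set y | T y].
  apply/eqP; rewrite eqEcard; apply/andP; split.
    by apply/subsetP => y /imsetP [x]; rewrite !inE => xQ ->; exact: hT.
  by rewrite card_imset ?cnt_card //; exact: mulfI.
symmetry; apply: (card_bij (f := fun x => a3 * x)).
- by move=> x y _ _; exact: mulfI.
- by move=> x; rewrite !inE => /andP [xQ hP]; rewrite hT.
- move=> y; rewrite inE => /andP [Ty Py].
  have : y \in (fun x => a3 * x) @: [set x | isQ x] by rewrite im inE.
  by case/imsetP => x; rewrite inE => xQ ey; exists x => //; rewrite inE xQ -ey.
Qed.

Section Final.
Variable m : nat.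
Hypotheses (hm0 : (0 < m)%N) (hFm : #|F| = (3 ^ m)%N).

Lemma inner_A (a1 a2 a3 x1 : F) : a1 != 0 ->
  (\sum_(x2 : F) \sum_(x3 : F) leeR (TrR m (mulR (uB a1 a2 a3) (uB x1 x2 x3))) =
   18 * (3 ^ (m - 1) * 3 ^ (m - 1)))%N.
Proof.
move=> a10.
under eq_bigr => x2 _ do under eq_bigr => x3 _ do rewrite mulR_uB TrR_uB -/(w3 _ _ _) -addrA.
have [c0 ->] := tr_ord hFm (a1 * x1).
under eq_bigr => x2 _ do rewrite (sum_affine (fun y => w3 c0%:R (tr m (a1 * x2 + a2 * x1)) (tr m y)) (a2 * x2 + a3 * x1) a10).
rewrite (sum_affine (fun z => \sum_(y : F) w3 c0%:R (tr m z) (tr m y)) (a2 * x1) a10).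
under eq_bigr => y2 _ do rewrite (sum_tr hm0 hFm (fun z => w3 c0%:R (tr m y2) z)).
rewrite (sum_tr hm0 hFm (fun s => 3 ^ (m - 1) * \sum_(t < 3) w3 c0%:R s t%:R)%N).
rewrite -big_distrr /= w3_sum2; ring.
Qed.


Lemma inner_B (a2 a3 x1 : F) : a2 != 0 ->
  (\sum_(x2 : F) \sum_(x3 : F) leeR (TrR m (mulR (uB 0%R a2 a3) (uB x1 x2 x3))) =
   18 * (3 ^ (m - 1) * 3 ^ (m - 1)))%N.
Proof.
move=> a20.
under eq_bigr => x2 _ do under eq_bigr => x3 _ do
  rewrite mulR_uB TrR_uB -/(w3 _ _ _) !mul0r !add0r tr0.
have [c0 ->] := tr_ord hFm (a2 * x1).
under eq_bigr => x2 _ do rewrite sum_nat_const.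
rewrite -big_distrr /= (sum_affine (fun y => w3 0 c0%:R (tr m y)) (a3 * x1) a20).
rewrite (sum_tr hm0 hFm (fun z => w3 0 c0%:R z)) -[0 : F]/(0%:R) w3_sum1 hFm.
case: m hm0 => // n _; rewrite expnS subn1 /=; ring.
Qed.

Lemma inner_b (a3 x1 : F) :
  (\sum_(x2 : F) \sum_(x3 : F) leeR (TrR m (mulR (uB 0%R 0%R a3) (uB x1 x2 x3))) =
   #|F| * #|F| * (3 * ((tr m (a3 * x1)%R != 0%R) : nat)))%N.
Proof.
under eq_bigr => x2 _ do under eq_bigr => x3 _ do
  rewrite mulR_uB TrR_uB -/(w3 _ _ _) !mul0r !add0r tr0.
have [c0 ->] := tr_ord hFm (a3 * x1).
rewrite -[0 : F]/(0%:R) w3_00.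
under eq_bigr => x2 _ do rewrite sum_nat_const.
rewrite sum_nat_const.
have -> : ((c0%:R : F) != 0%:R) = (c0 != 0 :> nat) by rewrite natF_inj.
by rewrite mulnA.
Qed.


Lemma sum_cond_const (C : pred F) (c : nat) :
  (\sum_(x | C x) c = (\sum_(x : F) (C x : nat)) * c)%N.
Proof.
rewrite big_mkcond big_distrl /=; apply: eq_bigr => x _.
by case: (C x); rewrite ?mul1n ?mul0n.
Qed.

Lemma sum_eq0 : (\sum_(x : F) (x == 0%R : nat) = 1)%N.
Proof. by rewrite (bigD1 0) //= eqxx big1 // => x /negbTE ->. Qed.

Lemma cQ : (2 * \sum_(y : F) (isQ y : nat) = #|F| - 1)%N.
Proof.
have e := sq_count xpredT.
have e1 : #|[set y : F | isQ y && xpredT y]| = (\sum_(y : F) (isQ y : nat))%N.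
  by rewrite cnt_card; apply: eq_bigr => y _; rewrite andbT.
rewrite -e1 -e subn1 -(cardsC1 (0 : F)); apply: eq_card => x; rewrite !inE andbT.
by [].
Qed.

Lemma cQN : (#|F| = 1 + \sum_(y : F) (isQ y : nat) + \sum_(y : F) (isN y : nat))%N.
Proof.
have := cnt_split (P := xpredT) isT; rewrite /= => <-.
by rewrite sum1_card.
Qed.

Lemma cT0 : (\sum_(y : F) (tr m y == 0%R : nat) = 3 ^ (m - 1))%N.
Proof. exact: (fiberF hm0 hFm ord0). Qed.

Lemma cTsplit : (\sum_(y : F) (tr m y == 0%R : nat) =
  1 + \sum_(y : F) ((tr m y == 0%R) && isQ y : nat) + \sum_(y : F) ((tr m y == 0%R) && isN y : nat))%N.
Proof. by apply: cnt_split; rewrite /= tr0. Qed.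

Lemma cQ0 : (2 * \sum_(y : F) ((tr m y == 0%R) && isQ y : nat) + 1 =
  #|[set x : F | tr m (x ^+ 2)%R == 0%R]|)%N.
Proof.
have := sq_count (fun y => tr m y == 0); rewrite !cnt_card.
have -> : (\sum_(x : F) (isQ x && (tr m x == 0%R) : nat) =
           \sum_(y : F) ((tr m y == 0%R) && isQ y : nat))%N.
  by apply: eq_bigr => x _; rewrite andbC.
move=> <-; rewrite -sum_eq0 -big_split /=; apply: eq_bigr => x _.
by case: eqP => [-> | _] /=; rewrite ?expr0n ?tr0 ?eqxx //= addn0.
Qed.

Lemma cnt_nz (T : pred F) : (#|[set y | T y && (tr m y != 0%R)]| +
   \sum_(y : F) ((tr m y == 0%R) && T y : nat) = \sum_(y : F) (T y : nat))%N.
Proof.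
rewrite cnt_card -big_split /=; apply: eq_bigr => y _.
by case: (T y); case: (tr m y == 0).
Qed.

End Final.

End Main.

Lemma exists_i (F : finFieldType) : (4 %| #|F|.-1)%N -> exists i : F, i ^+ 2 = -1.
Proof.
move=> h4; set N := #|F|.-1.
have e : #|F| = N.+1 by rewrite /N prednK // ltnW // finNzRing_gt1.
have N0 : (0 < N)%N by have := finNzRing_gt1 F; rewrite e.
have : has N.-primitive_root (enum [set~ (0 : F)]).
  apply: has_prim_root => //.
  - apply/allP => x; rewrite mem_enum !inE => x0; rewrite unity_rootE.
    apply/eqP; have h : x * x ^+ N = x * 1 by rewrite mulr1 -exprS -e expf_card.
    exact: (mulfI x0 h).
  - exact: enum_uniq.
  - by rewrite -cardE cardsC1.
case/hasP => z _ pz.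
case/dvdnP: h4 => j hj0.
have hj : N = (j * 4)%N by exact: hj0.
have j0 : (0 < j)%N by move: N0; rewrite hj; case: j {hj hj0}.
exists (z ^+ j).
have z4 : ((z ^+ j) ^+ 2) ^+ 2 = 1.
  rewrite -!exprM; have -> : (j * (2 * 2) = N)%N by rewrite hj.
  exact: prim_expr_order.
have z2 : (z ^+ j) ^+ 2 != 1.
  rewrite -exprM -(prim_order_dvd pz) hj; apply/negP => /dvdn_leq.
  move=> H; have hh : (0 < j * 2)%N by lia.
  by have := H hh; lia.
by move: z4 => /eqP; rewrite sqrf_eq1 (negbTE z2) /= => /eqP.
Qed.

Lemma pow3_odd j : exists r, (3 ^ (2 * j + 1) = 4 * r + 3)%N.
Proof.
elim: j => [|j [r hr]]; first by exists 0%N.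
exists (9 * r + 6)%N; have -> : (2 * j.+1 + 1 = (2 * j + 1) + 2)%N by lia.
rewrite expnD hr; lia.
Qed.

Lemma arith_Q (B X Qc Q0 : nat) : (0 < B)%N -> (X + Q0 = Qc)%N -> (2 * Qc = 9 * B * B - 1)%N ->
  (2 * Q0 + 1 = 3 * B + (3 * B - 1) * B)%N ->
  (9 * B * B * (9 * B * B) * (3 * X) = (3 * B) ^ 6 - (3 * B) ^ 5)%N.
Proof.
move=> B0 h1 h2 h3.
have hX : X = (3 * (B * B) - B)%N.
  have hC : (B <= B * B)%N by rewrite leq_pmulr.
  move: h2 h3; rewrite mulnBl -!mulnA; set C := (B * B)%N; move=> h2 h3; lia.
rewrite hX !mulnBr; congr (_ - _)%N; ring.
Qed.

Lemma arith_N (B X Qc Nc Q0 N0 : nat) : (0 < B)%N -> (X + N0 = Nc)%N -> (Nc = Qc)%N ->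
  (3 * B * B = 1 + Q0 + N0)%N -> (2 * Qc = 9 * B * B - 1)%N ->
  (2 * Q0 + 1 = 3 * B + (3 * B - 1) * B)%N ->
  (9 * B * B * (9 * B * B) * (3 * X) = (3 * B) ^ 6 + (3 * B) ^ 5)%N.
Proof.
move=> B0 h1 h0 h4 h2 h3.
have hX : X = (3 * (B * B) + B)%N.
  have hC : (B <= B * B)%N by rewrite leq_pmulr.
  move: h2 h3 h4; rewrite mulnBl -!mulnA; set C := (B * B)%N; move=> h2 h3 h4; lia.
rewrite hX; ring.
Qed.

Lemma arith_c (B Qc : nat) : (0 < B)%N -> (2 * Qc = 9 * B * B - 1)%N ->
  (Qc * (18 * (3 * B * B * (3 * B * B))) = (3 * B) ^ 6 - (3 * B) ^ 4)%N.
Proof.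
move=> B0 h2.
have hC : (1 <= B * B)%N by rewrite muln_gt0 B0.
have e : (Qc * (18 * (3 * B * B * (3 * B * B))) = (2 * Qc) * (81 * (B * B * (B * B))))%N by ring.
rewrite e h2 -!mulnA mulnBl; congr (_ - _)%N; ring.
Qed.

Lemma arith_NQ (q Qc Nc : nat) : (2 * Qc = q - 1)%N -> (q = 1 + Qc + Nc)%N -> Nc = Qc.
Proof. lia. Qed.


Theorem theorem5p2 (F : finFieldType) (m : nat)
    (hF : #|F| = (3 ^ m)%N) (hm : (m %% 4 = 2)%N) (a : calR F) :
  (a = (0, 0, 0) -> wL_ev m a = 0%N) /\
  (forall a3 : F, a = uB 0 0 a3 ->
     (isQ a3 -> wL_ev m a = (3 ^ (3 * m) - 3 ^ ((5 * m) %/ 2))%N) /\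
     (isN a3 -> wL_ev m a = (3 ^ (3 * m) + 3 ^ ((5 * m) %/ 2))%N)) /\
  (~ in_ideal_u1sq a -> wL_ev m a = (3 ^ (3 * m) - 3 ^ (2 * m))%N).
Proof.
have h3 : (3%:R : F) = 0 by apply: pcharf0; apply: (card_finPcharP hF).
have [k [hmk [hk [r hr]]]] : exists k, [/\ m = (k + k)%N, (0 < k)%N & exists r, (3 ^ k = 4 * r + 3)%N].
  exists (2 * (m %/ 4) + 1)%N; split; first by have := divn_eq m 4; rewrite hm; lia.
    by rewrite addn1.
  exact: pow3_odd.
have hm0 : (0 < m)%N by lia.
have hcard : #|F| = (3 ^ k * 3 ^ k)%N by rewrite hF hmk expnD.
have h4 : (4 %| #|F|.-1)%N.
  rewrite hcard hr; apply/dvdnP; exists (4 * r * r + 6 * r + 2)%N; rewrite -subn1; nia.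
have [i hi2] := exists_i h4.
have hsi : i ^+ (3 ^ k) = - i.
  have i4 : i ^+ 4 = 1 by rewrite -[4%N]/(2 * 2)%N exprM hi2 sqrrN expr1n.
  by rewrite hr exprD exprM i4 expr1n mul1r exprS hi2 mulrN1.
have S0 := S0_count h3 hk hi2 hsi hcard; rewrite -hmk in S0.
set B := (3 ^ (k - 1))%N in S0.
have hkB : (3 ^ k = 3 * B)%N by rewrite /B -expnS; congr (3 ^ _)%N; lia.
have hmB : (3 ^ (m - 1) = 3 * B * B)%N.
  by rewrite (_ : (m - 1 = k + (k - 1))%N); [rewrite expnD hkB | lia].
have hqB : #|F| = (9 * B * B)%N by rewrite hcard hkB; ring.
have B0 : (0 < B)%N by rewrite /B expn_gt0.
rewrite hkB in S0.
have e3m : (3 ^ (3 * m) = (3 * B) ^ 6)%N by rewrite -hkB -expnM; congr (3 ^ _)%N; lia.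
have e2m : (3 ^ (2 * m) = (3 * B) ^ 4)%N by rewrite -hkB -expnM; congr (3 ^ _)%N; lia.
have e5m : (3 ^ ((5 * m) %/ 2) = (3 * B) ^ 5)%N by rewrite -hkB -expnM; congr (3 ^ _)%N; lia.
have eQ := cQ h3.
have eQN := cQN F.
have eT0 := cT0 h3 hm0 hF.
have eTs := cTsplit F m.
have eQ0 := cQ0 h3 m; rewrite S0 in eQ0.
split.
  move=> ->; rewrite /wL_ev big1 // => [[[x1 x2] x3]] _ /=.
  by rewrite !mul0r !addr0 !tr0 eqxx.
split.
  move=> a3 ->; rewrite wL_split.
  under eq_bigr => x1 _ do rewrite (inner_b h3 hF).
  rewrite -big_distrr /= -big_distrr /=.
  have hcnt : (\sum_(x1 | isQ x1) ((tr m (a3 * x1)%R != 0%R) : nat) =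
     #|[set x | isQ x && (tr m (a3 * x)%R != 0%R)]|)%N.
    rewrite big_mkcond cnt_card; apply: eq_bigr => x _ /=; by case: (isQ x).
  rewrite hcnt; split => hQ.
    have a30 : a3 != 0 by case/andP: hQ.
    rewrite (mulQ (T := @isQ F) a30 (fun x hx => isQ_mul hQ hx) (leqnn _) (fun y => tr m y != 0)).
    have := cnt_nz m (@isQ F).
    rewrite e3m e5m hqB; rewrite hqB in eQ.
    move=> h1; exact: (arith_Q B0 h1 eQ eQ0).
  have a30 : a3 != 0 by exact: isN_neq0.
  have hNQ : (\sum_(y : F) (isN y : nat) = \sum_(y : F) (isQ y : nat))%N.
    exact: (arith_NQ eQ eQN).
  rewrite (mulQ (T := @isN F) a30 (fun x hx => isN_mul hQ hx) (eq_leq hNQ) (fun y => tr m y != 0)).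
  have := cnt_nz m (@isN F).
  rewrite e3m e5m hqB; rewrite hqB in eQ; rewrite eT0 hmB in eTs.
  move=> h1; exact: (arith_N B0 h1 hNQ eTs eQ eQ0).
move=> hnot; have [a1 [a2 [a3 ea]]] := uB_surj a; subst a; rewrite wL_split.
case: (eqVneq a1 0) => [a10 | a10].
  subst a1; have a20 : a2 != 0.
    by apply/eqP => a20; apply: hnot; exists a3; rewrite a20.
  under eq_bigr => x1 _ do rewrite (inner_B h3 hm0 hF a3 x1 a20).
  rewrite sum_cond_const e3m e2m hmB; rewrite hqB in eQ; exact: arith_c B0 eQ.
under eq_bigr => x1 _ do rewrite (inner_A h3 hm0 hF a2 a3 x1 a10).
rewrite sum_cond_const e3m e2m hmB; rewrite hqB in eQ; exact: arith_c B0 eQ.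
Qed.
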